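(* Let $\pi_1,\dots,\pi_m$ be permutations of order at least two with $|\pi_1|\ge|\pi_2|\ge\dots\ge|\pi_m|$. If there exist non-zero reals $t_1,\dots,t_m$ with $\sum_{i\in[m]}t_iP_{\pi_i}=0$, then $m\ge2$ and $|\pi_1|=|\pi_2|$.
   Context: A $k$-permutation is a bijection of $[k]=\{1,\dots,k\}$; $|\pi|$ denotes its order. The gradient polynomial of a $k$-permutation $\pi$ is $P_\pi(\alpha,\beta)=k!\sum_{m\in[k]}\left(\frac{k-m}{1-\alpha}-\frac{m-1}{\alpha}\right)\left(\frac{k-\pi(m)}{1-\beta}-\frac{\pi(m)-1}{\beta}\right)\frac{\alpha^{m-1}(1-\alpha)^{k-m}\beta^{\pi(m)-1}(1-\beta)^{k-\pi(m)}}{(m-1)!(k-m)!(\pi(m)-1)!(k-\pi(m))!}$, a polynomial in $\alpha,\beta$; the equation $\sum t_iP_{\pi_i}=0$ is an identity of polynomials. *)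

(* Defs.v *)
From mathcomp Require Import all_boot all_order all_algebra all_fingroup.
From mathcomp Require Import reals.
Set Implicit Arguments. Unset Strict Implicit. Unset Printing Implicit Defensive.
Import Order.TTheory GRing.Theory Num.Theory.
Local Open Scope ring_scope.

(* For a k-permutation and m in [k], the polynomial
     ((k-m)/(1-x) - (m-1)/x) * x^(m-1) (1-x)^(k-m)
   written without division (cancelling the denominators):
     (k-m) x^(m-1) (1-x)^(k-m-1) - (m-1) x^(m-2) (1-x)^(k-m).
   (Natural-number truncation in the exponents only occurs when the
   corresponding coefficient k-m resp. m-1 is zero.) *)
Definition gfactor {R : realType} (k m : nat) (x : R) : R :=
  (k - m)%:R * x ^+ (m - 1) * (1 - x) ^+ (k - m - 1)
  - (m - 1)%:R * x ^+ (m - 2) * (1 - x) ^+ (k - m).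

(* Gradient polynomial of a k-permutation pi (pi : 'S_k acts on 'I_k = {0..k-1};
   the element m in [k] corresponds to i : 'I_k with m = i+1, and
   pi(m) = (pi i)+1), evaluated at (alpha, beta). *)
Definition gradP {R : realType} (k : nat) (pi : 'S_k) (a b : R) : R :=
  (k`!)%:R * \sum_(i < k)
    (gfactor k i.+1 a * gfactor k (pi i).+1 b
     / ((i`!)%:R * ((k - i.+1)`!)%:R * (((pi i : nat)`!)%:R)
        * ((k - (pi i).+1)`!)%:R)).

Definition anyperm := {k : nat & 'S_k}.
Definition pord (p : anyperm) : nat := projT1 p.
Definition gradPa {R : realType} (p : anyperm) (a b : R) : R :=
  gradP (projT2 p) a b.

(* Main.v *)
Require Import Defs.
From mathcomp Require Import all_boot all_order all_algebra all_fingroup.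
From mathcomp Require Import reals.
From mathcomp Require Import ring lra zify.
Import Order.TTheory GRing.Theory Num.Theory.
Local Open Scope ring_scope.

Section S.
Variable R : realType.

Lemma poly_fun0 (p : {poly R}) : (forall x, p.[x] = 0) -> p = 0.
Proof.
move=> H; apply/eqP; apply/negPn/negP => Hp.
have H1 : all (root p) [seq i%:R | i <- iota 0 (size p)].
  by apply/allP => x /mapP [i _ ->]; rewrite /root H.
have H2 : uniq [seq i%:R : R | i <- iota 0 (size p)].
  rewrite map_inj_uniq ?iota_uniq //; exact: (mulrIn (oner_neq0 R)).
have := @max_poly_roots _ p _ Hp H1 H2.
by rewrite size_map size_iota ltnn.
Qed.

Lemma coef1X (e r : nat) :
  ((1 - 'X : {poly R}) ^+ e)`_r = if (e < r)%N then 0 else if r == e then (-1) ^+ e else ((1 - 'X : {poly R}) ^+ e)`_r.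
Proof.
elim: e r => [|e IH] r.
  rewrite expr0 coef1; case: r => //.
rewrite exprSr mulrBr mulr1 coefB coefMX.
have [Hr|Hr] := ltnP e.+1 r.
  have := IH r; rewrite (ltn_trans (ltnSn e) Hr) => ->.
  case: (r =P 0)%N => [E|_]; first by move: Hr; rewrite E.
  have := IH r.-1; rewrite (_ : (e < r.-1)%N = true); last by lia.
  by move=> ->; rewrite subr0.
case: (r =P e.+1) => [->|_] //.
have := IH e.+1; rewrite ltnSn => ->; rewrite sub0r /= ?ltnn ?eqxx.
have := IH e; rewrite ltnn eqxx => ->; by rewrite exprS mulN1r.
Qed.

Definition Apoly (k j : nat) : {poly R} :=
  if (j.+1 < k)%N then ((j`!)%:R * ((k - 2 - j)`!)%:R)^-1 *: ('X^j * (1 - 'X) ^+ (k - 2 - j))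
  else 0.
Definition Bpoly (k i : nat) : {poly R} :=
  Apoly k i - (if i is i'.+1 then Apoly k i' else 0).

Lemma fact_neq0 n : (n`!)%:R != 0 :> R.
Proof. by rewrite pnatr_eq0 -lt0n fact_gt0. Qed.

Lemma nS0 n : 1 + n%:R != 0 :> R.
Proof. by rewrite -mulrS pnatr_eq0. Qed.

Lemma hornerA k j x : (Apoly k j).[x] =
  if (j.+1 < k)%N then x ^+ j * (1 - x) ^+ (k - 2 - j) / ((j`!)%:R * ((k - 2 - j)`!)%:R) else 0.
Proof.
rewrite /Apoly; case: ifP => _; last by rewrite horner0.
by rewrite hornerZ hornerM hornerXn horner_exp hornerD hornerN hornerX hornerC mulrC.
Qed.

Lemma gfB k i x : (i < k)%N ->
  gfactor k i.+1 x / ((i`!)%:R * ((k - i.+1)`!)%:R) = (Bpoly k i).[x].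
Proof.
move=> ik; rewrite /Bpoly hornerD hornerN /gfactor.
have E1 : (i.+1 - 1 = i)%N by lia.
rewrite E1.
have [Hl|Hl] := ltnP i.+1 k.
  set e := (k - 2 - i)%N.
  have Ek : (k - i.+1 = e.+1)%N by rewrite /e; lia.
  have Ek1 : (k - i.+1 - 1 = e)%N by rewrite /e; lia.
  rewrite Ek1 Ek hornerA Hl -/e.
  case: i ik Hl E1 @e Ek Ek1 => [|i'] ik Hl E1 e Ek Ek1.
    rewrite horner0 !(mul0r, subr0) factS natrM.
    by field; rewrite !fact_neq0 ?nS0.
  rewrite hornerA (_ : (i'.+1 < k)%N = true); last by lia.
  have -> : (k - 2 - i' = e.+1)%N by rewrite /e; lia.
  have -> : (i'.+2 - 2 = i')%N by lia.
  rewrite !factS !natrM.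
  have := fact_neq0 e; have := fact_neq0 i'.
  have : (e.+1%:R : R) != 0 by rewrite pnatr_eq0.
  have : (i'.+1%:R : R) != 0 by rewrite pnatr_eq0.
  move=> h1 h2 h3 h4; field.
  by rewrite !fact_neq0 ?nS0.
have Eki : k = i.+1 by lia.
subst k.
rewrite subnn /= hornerA ltnn !mul0r sub0r.
case: i ik Hl E1 => [|i'] ik Hl E1.
  by rewrite horner0 !mul0r oppr0 mul0r addr0.
rewrite hornerA (_ : (i'.+1 < i'.+2)%N = true) //.
have -> : (i'.+2 - 2 - i' = 0)%N by lia.
have -> : (i'.+2 - 2 = i')%N by lia.
rewrite !expr0 !mulr1 !factS !natrM.
field.
by rewrite !fact_neq0 ?nS0.
Qed.

Lemma gradP_B k (p : 'S_k) (a b : R) :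
  gradP p a b = (k`!)%:R * \sum_(i < k) (Bpoly k i).[a] * (Bpoly k (p i)).[b].
Proof.
rewrite /gradP; congr (_ * _); apply: eq_bigr => i _.
rewrite -!gfB //; field.
by rewrite !fact_neq0.
Qed.

Lemma coef1X0 e : ((1 - 'X : {poly R}) ^+ e)`_0 = 1.
Proof. by rewrite -horner_coef0 horner_exp !hornerE subr0 expr1n. Qed.

Lemma coefA_hi k j d : (k.-1 <= d)%N -> (Apoly k j)`_d = 0.
Proof.
move=> hd; rewrite /Apoly; case: ifP => hj; last by rewrite coef0.
rewrite coefZ coefXnM; case: ifP => _; first by rewrite mulr0.
rewrite coef1X (_ : (k - 2 - j < d - j)%N = true) ?mulr0 //; lia.
Qed.

Lemma coefB_hi k j d : (k.-1 <= d)%N -> (Bpoly k j)`_d = 0.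
Proof.
move=> hd; rewrite /Bpoly coefB coefA_hi //; case: j => [|j]; first by rewrite coef0 subr0.
by rewrite coefA_hi // subr0.
Qed.

Lemma coefA_lo k j s : (s < j)%N -> (Apoly k j)`_s = 0.
Proof.
move=> hs; rewrite /Apoly; case: ifP => hj; last by rewrite coef0.
by rewrite coefZ coefXnM hs mulr0.
Qed.

Lemma coefA_diag k s : (s.+1 < k)%N -> (Apoly k s)`_s != 0.
Proof.
move=> hs; rewrite /Apoly hs coefZ coefXnM ltnn subnn coef1X0 mulr1.
by rewrite invr_eq0 mulf_neq0 ?fact_neq0.
Qed.

Lemma coefA_top k : (2 <= k)%N -> (Apoly k 0)`_(k - 2) != 0.
Proof.
move=> hk; rewrite /Apoly (_ : (1 < k)%N = true) // coefZ coefXnM /= subn0.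
rewrite coef1X ltnn eqxx mulf_neq0 //.
  by rewrite invr_eq0 mulf_neq0 ?fact_neq0.
by rewrite expf_neq0 // oppr_eq0 oner_eq0.
Qed.

Lemma rearr k (u : nat -> R) :
  \sum_(j < k) u j *: Bpoly k j = \sum_(j < k.-1) (u j - u j.+1) *: Apoly k j.
Proof.
case: k => [|k]; first by rewrite !big_ord0.
rewrite /Bpoly; under eq_bigr do rewrite scalerBr.
rewrite sumrB big_ord_recr [X in _ - X]big_ord_recl /=.
rewrite {2}/Apoly ltnn scaler0 addr0 scaler0 add0r -sumrB.
by apply: eq_bigr => j _; rewrite scalerBl.
Qed.

Lemma indepA k (d : nat -> R) : \sum_(j < k.-1) d j *: Apoly k j = 0 ->
  forall j, (j < k.-1)%N -> d j = 0.
Proof.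
move=> H j hj; apply/eqP/negPn/negP => hd.
have ex : exists s, (s < k.-1)%N && (d s != 0) by exists j; rewrite hj hd.
case: (ex_minnP ex) => s /andP [hs ds] hmin.
have := congr1 (fun p : {poly R} => p`_s) H; rewrite /= coef0 coef_sum.
rewrite (bigD1 (Ordinal hs)) //= big1 ?addr0.
  have hs1 : (s.+1 < k)%N by lia.
  by rewrite coefZ => /eqP; rewrite mulf_eq0 (negbTE ds) /= (negbTE (coefA_diag _ _ hs1)).
move=> i /eqP hi; rewrite coefZ.
have [lt|ge] := ltnP s i; first by rewrite coefA_lo ?mulr0.
have : (i < s)%N.
  rewrite ltn_neqAle ge andbT; apply/eqP => E; apply: hi; exact: val_inj.
move=> lis; case: (d i =P 0) => [->|/eqP ne]; first by rewrite mul0r.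
have := hmin i; rewrite ltn_ord ne => /(_ isT); lia.
Qed.

Lemma key K (p : 'S_K) : (2 <= K)%N ->
  ~ (forall b : R, \sum_(i < K) (Bpoly K i)`_(K - 2) * (Bpoly K (p i)).[b] = 0).
Proof.
move=> hK H.
pose w := fun i : 'I_K => (Bpoly K i)`_(K - 2).
have T0 : \sum_(i < K) w i *: Bpoly K (p i) = 0.
  apply: poly_fun0 => b; rewrite horner_sum -[RHS](H b).
  by apply: eq_bigr => i _; rewrite hornerZ.
have h0 : (0 < K)%N by lia.
pose i0 := Ordinal h0.
pose u := fun j : nat => w ((p^-1)%g (insubd i0 j)).
have Ins : forall j : 'I_K, insubd i0 j = j.
  by move=> j; apply: val_inj; rewrite val_insubd ltn_ord.
have T1 : \sum_(j < K) u j *: Bpoly K j = 0.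
  rewrite -[RHS]T0 [RHS](reindex_inj (@perm_inj _ (p^-1)%g)).
  by apply: eq_bigr => j _; rewrite /u Ins permKV.
rewrite rearr in T1.
have hd := indepA K (fun j => u j - u j.+1) T1.
have hu : forall j, (j < K)%N -> u j = u 0%N.
  elim=> [//|j IH] hj; rewrite -IH; last by lia.
  by apply/eqP; rewrite eq_sym -subr_eq0; apply/eqP; apply: hd; lia.
have hw : forall i, w i = u 0%N.
  by move=> i; rewrite -(hu (p i)) // /u Ins permK.
have S0 : \sum_(i < K) w i = 0.
  have E2 : \sum_(j < K) Bpoly K j = 0.
    transitivity (\sum_(j < K) (fun _ => 1 : R) j *: Bpoly K j).
      by apply: eq_bigr => j _; rewrite scale1r.
    by rewrite (rearr K (fun _ => 1)) big1 // => j _; rewrite subrr scale0r.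
  by rewrite /w -coef_sum E2 coef0.
have : w i0 = 0.
  move: S0; rewrite (eq_bigr _ (fun i _ => hw i)) sumr_const card_ord -(hw i0).
  by move/eqP; rewrite -mulr_natr mulf_eq0 pnatr_eq0 /= => /orP [/eqP //|]; lia.
rewrite /w /Bpoly /= subr0; apply/eqP; exact: coefA_top.
Qed.

End S.
Arguments Apoly {R} k j.
Arguments Bpoly {R} k i.

Theorem lemma11 (R : realType) (m : nat) (pi : nat -> anyperm) (t : nat -> R) :
  (1 <= m)%N ->
  (forall i, (i < m)%N -> (2 <= pord (pi i))%N) ->
  (forall i j, (i <= j < m)%N -> (pord (pi j) <= pord (pi i))%N) ->
  (forall i, (i < m)%N -> t i != 0) ->
  (forall a b : R, \sum_(i < m) t i * gradPa (pi i) a b = 0) ->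
  (2 <= m)%N /\ pord (pi 0%N) = pord (pi 1%N).
Proof.
move=> hm h2 hmono ht H.
case: (boolP ((2 <= m)%N && (pord (pi 0%N) == pord (pi 1%N)))).
  by case/andP => ? /eqP.
move=> hneg; exfalso.
have hK := h2 0%N hm.
have hlt : forall i, (0 < i < m)%N -> (pord (pi i) < pord (pi 0%N))%N.
  move=> i /andP [i0 im].
  have m2 : (2 <= m)%N by lia.
  have h01 := hmono 0%N 1%N (m2 : (0 <= 1 < m)%N).
  have h1i : (pord (pi i) <= pord (pi 1%N))%N by apply: hmono; lia.
  move: hneg; rewrite m2 /= => hne.
  have : pord (pi 1%N) != pord (pi 0%N) by rewrite eq_sym.
  lia.
apply: (key R _ (projT2 (pi 0%N)) hK) => b.
pose PA (q : anyperm) : {poly R} := ((pord q)`!)%:R *: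
  \sum_(i < pord q) (Bpoly (pord q) (projT2 q i)).[b] *: Bpoly (pord q) i.
have hPA : forall q a, (PA q).[a] = gradPa q a b.
  move=> q a; rewrite /gradPa gradP_B hornerZ horner_sum; congr (_ * _).
  by apply: eq_bigr => i _; rewrite hornerZ mulrC.
have S0 : \sum_(i < m) t i *: PA (pi i) = 0.
  apply: poly_fun0 => a; rewrite horner_sum -[RHS](H a b).
  by apply: eq_bigr => i _; rewrite hornerZ hPA.
have := congr1 (fun p : {poly R} => p`_(pord (pi 0%N) - 2)) S0.
rewrite /= coef0 coef_sum (bigD1 (Ordinal hm)) //= big1 ?addr0.
  rewrite coefZ => /eqP; rewrite mulf_eq0 (negbTE (ht 0%N hm)) /= => /eqP.
  rewrite /PA coefZ => /eqP; rewrite mulf_eq0 (negbTE (fact_neq0 _ _)) /= => /eqP.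
  rewrite coef_sum => E; rewrite -[RHS]E; apply: eq_bigr => i _.
  by rewrite coefZ mulrC.
move=> i /eqP hi0; rewrite /PA !coefZ coef_sum big1 ?mulr0 // => j _.
rewrite coefZ coefB_hi ?mulr0 //.
have : (0 < i < m)%N.
  rewrite ltn_ord andbT lt0n; apply/eqP => E; apply: hi0; exact: val_inj.
move/hlt; lia.
Qed.
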